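(* Assume the abstract framework described in the context. Let $f\in\mathcal{D}_2$. Then the element $$\mathbf{D}^{B}_\Omega f := -F|_\Omega + \big(\Pi^L(L(\mathbf{1}_\Omega F))\big)|_\Omega\in\mathcal{H}_2^\Omega$$ does not depend on the choice of $F\in\mathcal{H}_2$ with $\operatorname{Tr}_2F=f$; likewise $\mathbf{D}^{B}_{\mathcal{C}} f := -F|_{\mathcal{C}} + \big(\Pi^L(L(\mathbf{1}_{\mathcal{C}} F))\big)|_{\mathcal{C}}\in\mathcal{H}_2^{\mathcal{C}}$ does not depend on this choice. Moreover, for all $f\in\mathcal{D}_2$ and $g\in\mathcal{N}_2$, $$\|\mathbf{D}^{B}_\Omega f\|_{\mathcal{H}_2^\Omega}\le \frac{\|B^{\mathcal{C}}\|}{\lambda}\|f\|_{\mathcal{D}_2},\qquad \|\mathbf{D}^{B}_{\mathcal{C}} f\|_{\mathcal{H}_2^{\mathcal{C}}}\le \frac{\|B^{\Omega}\|}{\lambda}\|f\|_{\mathcal{D}_2},\qquad \|\mathbf{S}^L_\Omega g\|_{\mathcal{H}_2}\le \frac{1}{\lambda}\|g\|_{\mathcal{N}_2},$$ where $\|B^\Omega\|$, $\|B^{\mathcal C}\|$ denote the bounds (norms) of the bounded bilinear forms $B^\Omega$, $B^{\mathcal C}$.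
   Context: Abstract framework. Let $\mathcal{H}_1,\mathcal{H}_2$ be complex Hilbert spaces, and for $j=1,2$ let $\widehat{\mathcal{H}}_j^\Omega$, $\widehat{\mathcal{H}}_j^{\mathcal{C}}$, $\widehat{\mathcal{D}}_j$ be normed (or seminormed) vector spaces. We are given bounded linear operators $\operatorname{Tr}_j:\mathcal{H}_j\to\widehat{\mathcal{D}}_j$ and bounded linear ''restriction'' operators $F\mapsto F|_\Omega$ from $\mathcal{H}_j$ to $\widehat{\mathcal{H}}_j^\Omega$ and $F\mapsto F|_{\mathcal{C}}$ from $\mathcal{H}_j$ to $\widehat{\mathcal{H}}_j^{\mathcal{C}}$. Define $\mathcal{H}_j^\Omega=\{F|_\Omega:F\in\mathcal{H}_j\}$ with norm $\|f\|_{\mathcal{H}_j^\Omega}=\inf\{\|F\|_{\mathcal{H}_j}:F|_\Omega=f\}$, similarly $\mathcal{H}_j^{\mathcal{C}}$, and $\mathcal{D}_j=\{\operatorname{Tr}_jF:F\in\mathcal{H}_j\}$ with norm $\|f\|_{\mathcal{D}_j}=\inf\{\|F\|_{\mathcal{H}_j}:\operatorname{Tr}_jF=f\}$ (each modulo elements of norm zero). Let $\mathcal{N}_2=\mathcal{D}_1^*$ and $\mathcal{N}_1=\mathcal{D}_2^*$ be the dual spaces, $\langle\cdot,\cdot\rangle$ denoting duality pairings. We are given bounded bilinear forms $B:\mathcal{H}_1\times\mathcal{H}_2\to\mathbb{C}$, $B^\Omega:\mathcal{H}_1^\Omega\times\mathcal{H}_2^\Omega\to\mathbb{C}$, $B^{\mathcal{C}}:\mathcal{H}_1^{\mathcal{C}}\times\mathcal{H}_2^{\mathcal{C}}\to\mathbb{C}$,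 and there is $\lambda>0$ such that for all $u\in\mathcal{H}_1$, $v\in\mathcal{H}_2$, and all $\varphi,\psi\in\mathcal{H}_j$ ($j\in\{1,2\}$): (i) $\sup_{w\in\mathcal{H}_1\setminus\{0\}}|B(w,v)|/\|w\|_{\mathcal{H}_1}\ge\lambda\|v\|_{\mathcal{H}_2}$ and $\sup_{w\in\mathcal{H}_2\setminus\{0\}}|B(u,w)|/\|w\|_{\mathcal{H}_2}\ge\lambda\|u\|_{\mathcal{H}_1}$; (ii) $B(u,v)=B^\Omega(u|_\Omega,v|_\Omega)+B^{\mathcal{C}}(u|_{\mathcal{C}},v|_{\mathcal{C}})$; (iii) if $\operatorname{Tr}_j\varphi=\operatorname{Tr}_j\psi$ then there is $w\in\mathcal{H}_j$ with $w|_\Omega=\varphi|_\Omega$, $w|_{\mathcal{C}}=\psi|_{\mathcal{C}}$ and $\operatorname{Tr}_jw=\operatorname{Tr}_j\varphi$. Definitions: for $u\in\mathcal{H}_2$, $Lu\in\mathcal{H}_1^*$ is given by $\langle\varphi,Lu\rangle=B(\varphi,u)$. For $u\in\mathcal{H}_2^\Omega$, $L(u\mathbf{1}_\Omega)\in\mathcal{H}_1^*$ is given by $\langle\varphi,L(u\mathbf{1}_\Omega)\rangle=B^\Omega(\varphi|_\Omega,u)$ for all $\varphi\in\mathcal{H}_1$; for $F\in\mathcal H_2$, $L(\mathbf 1_\Omega F)$ means $L(F|_\Omega\mathbf 1_\Omega)$; analogously $L(u\mathbf{1}_{\mathcal{C}})$ with $B^{\mathcal{C}}$. Newton potential: for $H\in\mathcal{H}_1^*$,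 $\Pi^LH$ is the unique element of $\mathcal{H}_2$ with $B(\varphi,\Pi^LH)=\langle\varphi,H\rangle$ for all $\varphi\in\mathcal{H}_1$ (it exists uniquely by the Babuška–Lax–Milgram theorem). Single layer potential: for $g\in\mathcal{N}_2$, $\mathbf{S}^L_\Omega g$ is the unique element of $\mathcal{H}_2$ with $B(\varphi,\mathbf{S}^L_\Omega g)=\langle\operatorname{Tr}_1\varphi,g\rangle$ for all $\varphi\in\mathcal{H}_1$. *)

(* Defs.v *)
From Stdlib Require Import Reals.
From Coquelicot Require Import Coquelicot.
Open Scope R_scope.

Definition is_hilbert (H : CompleteNormedModule C_AbsRing) : Prop :=
  exists ip : H -> H -> C,
    (forall x y z : H, ip (plus x y) z = (ip x z + ip y z)%C) /\
    (forall (a : C) (x y : H), ip (scal a x) y = (a * ip x y)%C) /\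
    (forall x y : H, ip y x = Cconj (ip x y)) /\
    (forall x : H, ip x x = RtoC (norm x ^ 2)).

Definition is_seminorm (V : ModuleSpace C_Ring) (n : V -> R) : Prop :=
  (forall x y : V, n (plus x y) <= n x + n y) /\
  (forall (a : C) (x : V), n (scal a x) = Cmod a * n x).

Definition bounded_linear (H : CompleteNormedModule C_AbsRing)
  (V : ModuleSpace C_Ring) (n : V -> R) (T : H -> V) : Prop :=
  (forall x y : H, T (plus x y) = plus (T x) (T y)) /\
  (forall (a : C) (x : H), T (scal a x) = scal a (T x)) /\
  (exists M : R, forall x : H, n (T x) <= M * norm x).

Definition qnorm {H : CompleteNormedModule C_AbsRing} {V : Type}
  (T : H -> V) (x : V) : R :=
  real (Glb_Rbar (fun t => exists F : H, T F = x /\ t = norm F)).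

Definition bounded_bilinear (H1 H2 : CompleteNormedModule C_AbsRing)
  (B : H1 -> H2 -> C) : Prop :=
  (forall (a : C) (x y : H1) (v : H2),
      B (plus (scal a x) y) v = (a * B x v + B y v)%C) /\
  (forall (a : C) (u : H1) (x y : H2),
      B u (plus (scal a x) y) = (a * B u x + B u y)%C) /\
  (exists M : R, forall u v, Cmod (B u v) <= M * norm u * norm v).

(* A bilinear form b on the image spaces H1^X = r1(H1), H2^X = r2(H2)
   (equipped with their quotient norms), bounded. *)
Definition bounded_bilinear_img {H1 H2 : CompleteNormedModule C_AbsRing}
  {X1 X2 : Type} (r1 : H1 -> X1) (r2 : H2 -> X2) (b : X1 -> X2 -> C) : Prop :=
  (forall (a : C) (x y : H1) (v : H2),
      b (r1 (plus (scal a x) y)) (r2 v) = (a * b (r1 x) (r2 v) + b (r1 y) (r2 v))%C) /\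
  (forall (a : C) (u : H1) (x y : H2),
      b (r1 u) (r2 (plus (scal a x) y)) = (a * b (r1 u) (r2 x) + b (r1 u) (r2 y))%C) /\
  (exists M : R, forall u v,
      Cmod (b (r1 u) (r2 v)) <= M * qnorm r1 (r1 u) * qnorm r2 (r2 v)).

Definition bform_norm {H1 H2 : CompleteNormedModule C_AbsRing}
  {X1 X2 : Type} (r1 : H1 -> X1) (r2 : H2 -> X2) (b : X1 -> X2 -> C) : R :=
  real (Glb_Rbar (fun M => 0 <= M /\ forall u v,
      Cmod (b (r1 u) (r2 v)) <= M * qnorm r1 (r1 u) * qnorm r2 (r2 v))).

Definition in_dual {H : CompleteNormedModule C_AbsRing} {D : Type}
  (Tr : H -> D) (g : D -> C) : Prop :=
  (forall (a : C) (x y : H),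
      g (Tr (plus (scal a x) y)) = (a * g (Tr x) + g (Tr y))%C) /\
  (exists M : R, forall x : H, Cmod (g (Tr x)) <= M * qnorm Tr (Tr x)).

Definition dual_norm {H : CompleteNormedModule C_AbsRing} {D : Type}
  (Tr : H -> D) (g : D -> C) : R :=
  real (Glb_Rbar (fun M => 0 <= M /\ forall x : H,
      Cmod (g (Tr x)) <= M * qnorm Tr (Tr x))).

(* L(u 1_X) in H1^*:  phi |-> b (r1 phi) u. *)
Definition L_ind {H1 : CompleteNormedModule C_AbsRing} {X1 X2 : Type}
  (b : X1 -> X2 -> C) (r1 : H1 -> X1) (u : X2) : H1 -> C :=
  fun phi => b (r1 phi) u.

(* u = Pi^L h  :  B(phi, u) = <phi, h> for all phi. *)
Definition is_newton {H1 H2 : CompleteNormedModule C_AbsRing}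
  (B : H1 -> H2 -> C) (h : H1 -> C) (u : H2) : Prop :=
  forall phi : H1, B phi u = h phi.

(* s = S^L_Omega g :  B(phi, s) = <Tr1 phi, g> for all phi. *)
Definition is_single_layer {H1 H2 : CompleteNormedModule C_AbsRing} {D1 : Type}
  (B : H1 -> H2 -> C) (Tr1 : H1 -> D1) (g : D1 -> C) (s : H2) : Prop :=
  forall phi : H1, B phi s = g (Tr1 phi).

(* -F|_X + (Pi^L(L(1_X F)))|_X, where u stands for Pi^L(L(1_X F)). *)
Definition Dlayer {H2 : CompleteNormedModule C_AbsRing} {X : ModuleSpace C_Ring}
  (r : H2 -> X) (F u : H2) : X := plus (opp (r F)) (r u).

(* Main.v *)
Require Import Defs.
From Stdlib Require Import Reals Lra.
From Coquelicot Require Import Coquelicot.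
Open Scope R_scope.

Lemma minus_zero_eq {G : AbelianGroup} (x y : G) : minus x y = zero -> x = y.
Proof.
  intros H. unfold minus in H.
  transitivity (plus x (plus (opp y) y)).
  { transitivity (plus x zero). { symmetry. apply plus_zero_r. }
    f_equal. symmetry. apply plus_opp_l. }
  transitivity (plus (plus x (opp y)) y). { apply plus_assoc. }
  transitivity (plus zero y). { f_equal. exact H. }
  apply plus_zero_l.
Qed.

Lemma sopp {V : CompleteNormedModule C_AbsRing} (y : V) :
  scal (opp one) y = opp y.
Proof. exact (scal_opp_one (K:=AbsRing.Ring C_AbsRing) (V:=CompleteNormedModule.ModuleSpace C_AbsRing V) y). Qed.

Lemma lin_fun_minus {V : CompleteNormedModule C_AbsRing} (f : V -> C)
  (hf : forall (a : C) (x y : V), f (plus (scal a x) y) = (a * f x + f y)%C) :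
  forall x y, f (minus x y) = (f x - f y)%C.
Proof.
  assert (h0 : f zero = 0%C).
  { pose proof (hf one zero zero) as h. rewrite scal_one, plus_zero_r in h.
    change (one : C) with (RtoC 1) in h.
    assert (e : (f zero - f zero = (1 * f zero + f zero) - f zero)%C) by (rewrite <- h; reflexivity).
    replace (f zero) with ((1 * f zero + f zero) - f zero)%C by ring.
    rewrite <- e. ring. }
  assert (hopp : forall y, f (opp y) = (- f y)%C).
  { intros y.
    replace (opp y) with (plus (scal (opp one) y) zero)
      by (etransitivity; [exact (plus_zero_r (G:=CompleteNormedModule.AbelianMonoid C_AbsRing V) _)| exact (scal_opp_one (K:=AbsRing.Ring C_AbsRing) (V:=CompleteNormedModule.ModuleSpace C_AbsRing V) y)]).
    rewrite hf.
    transitivity (opp one * f y + 0)%C. { f_equal. exact h0. }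
    change (opp one : C) with (Copp (RtoC 1)). ring. }
  intros x y.
  replace (minus x y) with (plus (scal one x) (opp y))
    by (unfold minus; f_equal; apply scal_one).
  rewrite hf, hopp.
  change (one : C) with (RtoC 1). ring.
Qed.

Lemma lin_map_minus {V : CompleteNormedModule C_AbsRing} {W : ModuleSpace C_Ring} (r : V -> W)
  (hp : forall x y, r (plus x y) = plus (r x) (r y))
  (hs : forall (a : C) x, r (scal a x) = scal a (r x)) :
  forall x y, r (minus x y) = minus (r x) (r y).
Proof.
  intros x y. unfold minus.
  replace (opp y) with (scal (opp one) y) by apply sopp.
  rewrite hp, hs. f_equal. apply scal_opp_one.
Qed.

Lemma infsup_bound {H1 H2 : CompleteNormedModule C_AbsRing} (B : H1 -> H2 -> C)
  (lambda : R)
  (infsup1 : forall v : H2,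
     Rbar_le (lambda * norm v)
       (Lub_Rbar (fun t => exists w : H1, w <> zero /\ t = Cmod (B w v) / norm w)))
  (z : H2) (K : R) (hK : forall phi, Cmod (B phi z) <= K * norm phi) :
  lambda * norm z <= K.
Proof.
  pose proof (infsup1 z) as h1.
  destruct (Lub_Rbar_correct (fun t => exists w : H1, w <> zero /\ t = Cmod (B w z) / norm w)) as [_ hl].
  assert (h2 : Rbar_le (Lub_Rbar (fun t => exists w : H1, w <> zero /\ t = Cmod (B w z) / norm w)) K).
  { apply hl. intros t [w [hw ->]]. simpl.
    pose proof (norm_gt_0 w hw).
    apply Rle_div_l; [assumption|]. apply hK. }
  exact (Rbar_le_trans (Finite _) _ (Finite K) h1 h2).
Qed.

Lemma infsup_uniq {H1 H2 : CompleteNormedModule C_AbsRing} (B : H1 -> H2 -> C)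
  (lambda : R) (hlam : 0 < lambda)
  (linB : forall (a : C) (u : H1) (x y : H2),
      B u (plus (scal a x) y) = (a * B u x + B u y)%C)
  (infsup1 : forall v : H2,
     Rbar_le (lambda * norm v)
       (Lub_Rbar (fun t => exists w : H1, w <> zero /\ t = Cmod (B w v) / norm w)))
  (z z' : H2) (h : forall phi, B phi z = B phi z') : z = z'.
Proof.
  assert (E : norm (minus z z') = 0).
  2:{ apply minus_zero_eq. exact (norm_eq_zero _ E). }
  assert (hb : lambda * norm (minus z z') <= 0).
  { apply (infsup_bound B lambda infsup1). intros phi.
    pose proof (lin_fun_minus (B phi) (fun a x y => linB a phi x y) z z') as E.
    rewrite E, h. replace (B phi z' - B phi z')%C with (RtoC 0) by ring.
      rewrite Cmod_0. lra. }
  pose proof (norm_ge_0 (minus z z')). nra.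
Qed.

Lemma glb_bound (I : Type) (a P : I -> R) (E : R -> Prop)
  (hP : forall i, 0 <= P i)
  (hE : forall M, E M <-> 0 <= M /\ forall i, a i <= M * P i)
  (hex : exists M, forall i, a i <= M * P i) :
  0 <= real (Glb_Rbar E) /\ forall i, a i <= real (Glb_Rbar E) * P i.
Proof.
  destruct hex as [M hM].
  assert (hM' : E (Rmax M 0)).
  { apply hE. split. apply Rmax_r. intros i.
    apply Rle_trans with (M * P i). apply hM.
    apply Rmult_le_compat_r. apply hP. apply Rmax_l. }
  destruct (Glb_Rbar_correct E) as [hlb hgl].
  assert (h0 : Rbar_le (Finite 0) (Glb_Rbar E)).
  { apply hgl. intros x hx. apply hE in hx. simpl. tauto. }
  pose proof (hlb _ hM') as h1.
  destruct (Glb_Rbar E) as [l| |]; simpl in h0, h1 |- *; try contradiction.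
  split; [exact h0|].
  intros i. destruct (hP i) as [hpos|hz].
  - assert (hq : Rbar_le (Finite (a i / P i)) (Finite l)).
    { apply hgl. intros x hx. apply hE in hx. destruct hx as [_ hx]. simpl.
      apply Rle_div_l; [exact hpos|]. apply hx. }
    simpl in hq. apply Rle_div_l in hq; [|exact hpos]. exact hq.
  - apply hE in hM'. destruct hM' as [_ hM']. pose proof (hM' i) as hi.
    rewrite <- hz in hi |- *. lra.
Qed.

Lemma qnorm_facts {H : CompleteNormedModule C_AbsRing} {V : Type} (T : H -> V) (F : H) :
  0 <= qnorm T (T F) /\ qnorm T (T F) <= norm F.
Proof.
  unfold qnorm.
  destruct (Glb_Rbar_correct (fun t => exists F0 : H, T F0 = T F /\ t = norm F0)) as [hlb hgl].
  assert (h0 : Rbar_le (Finite 0) (Glb_Rbar (fun t => exists F0 : H, T F0 = T F /\ t = norm F0))).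
  { apply hgl. intros x [F0 [_ ->]]. simpl. apply norm_ge_0. }
  assert (h1 : Rbar_le (Glb_Rbar (fun t => exists F0 : H, T F0 = T F /\ t = norm F0)) (Finite (norm F))).
  { apply hlb. exists F. split; reflexivity. }
  destruct (Glb_Rbar _) as [l| |]; simpl in *; try contradiction. split; assumption.
Qed.

Lemma qnorm_ge {H : CompleteNormedModule C_AbsRing} {V : Type} (T : H -> V) (F : H) (c : R)
  (h : forall F', T F' = T F -> c <= norm F') : c <= qnorm T (T F).
Proof.
  pose proof (qnorm_facts T F) as _.
  unfold qnorm.
  destruct (Glb_Rbar_correct (fun t => exists F0 : H, T F0 = T F /\ t = norm F0)) as [hlb hgl].
  assert (h0 : Rbar_le (Finite c) (Glb_Rbar (fun t => exists F0 : H, T F0 = T F /\ t = norm F0))).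
  { apply hgl. intros x [F0 [e ->]]. simpl. apply h. exact e. }
  assert (h1 : Rbar_le (Glb_Rbar (fun t => exists F0 : H, T F0 = T F /\ t = norm F0)) (Finite (norm F))).
  { apply hlb. exists F. split; reflexivity. }
  destruct (Glb_Rbar _) as [l| |]; simpl in *; try contradiction. assumption.
Qed.

Lemma bform_facts {H1 H2 : CompleteNormedModule C_AbsRing} {X1 X2 : Type}
  (r1 : H1 -> X1) (r2 : H2 -> X2) (b : X1 -> X2 -> C)
  (hb : bounded_bilinear_img r1 r2 b) :
  0 <= bform_norm r1 r2 b /\ forall u v,
    Cmod (b (r1 u) (r2 v)) <= bform_norm r1 r2 b * qnorm r1 (r1 u) * qnorm r2 (r2 v).
Proof.
  destruct hb as [_ [_ [M hM]]].
  unfold bform_norm.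
  destruct (glb_bound (H1 * H2) (fun p => Cmod (b (r1 (fst p)) (r2 (snd p))))
     (fun p => qnorm r1 (r1 (fst p)) * qnorm r2 (r2 (snd p)))
     (fun M => 0 <= M /\ forall u v,
      Cmod (b (r1 u) (r2 v)) <= M * qnorm r1 (r1 u) * qnorm r2 (r2 v))) as [g1 g2].
  - intros [u v]. simpl. apply Rmult_le_pos; apply qnorm_facts.
  - intros M0. split.
    + intros [h1 h2]. split; [exact h1|]. intros [u v]. simpl. rewrite <- Rmult_assoc. apply h2.
    + intros [h1 h2]. split; [exact h1|]. intros u v. rewrite Rmult_assoc. apply (h2 (u, v)).
  - exists M. intros [u v]. simpl. rewrite <- Rmult_assoc. apply hM.
  - split; [exact g1|]. intros u v. rewrite Rmult_assoc. apply (g2 (u, v)).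
Qed.

Lemma dual_facts {H : CompleteNormedModule C_AbsRing} {D : Type}
  (Tr : H -> D) (g : D -> C) (hg : in_dual Tr g) :
  0 <= dual_norm Tr g /\ forall x, Cmod (g (Tr x)) <= dual_norm Tr g * qnorm Tr (Tr x).
Proof.
  destruct hg as [_ [M hM]].
  unfold dual_norm.
  apply (glb_bound H (fun x => Cmod (g (Tr x))) (fun x => qnorm Tr (Tr x))).
  - intros x. apply qnorm_facts.
  - intros M0. tauto.
  - exists M. exact hM.
Qed.

Lemma core {H1 H2 : CompleteNormedModule C_AbsRing} {XA1 XB1 XB2 : Type} {XA2 : ModuleSpace C_Ring}
  (B : H1 -> H2 -> C) (rA1 : H1 -> XA1) (rA2 : H2 -> XA2) (rB1 : H1 -> XB1) (rB2 : H2 -> XB2)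
  (BA : XA1 -> XA2 -> C) (BB : XB1 -> XB2 -> C)
  (linB : forall (a : C) (u : H1) (x y : H2),
      B u (plus (scal a x) y) = (a * B u x + B u y)%C)
  (rAp : forall x y, rA2 (plus x y) = plus (rA2 x) (rA2 y))
  (rAs : forall (a : C) x, rA2 (scal a x) = scal a (rA2 x))
  (split : forall u v, B u v = (BA (rA1 u) (rA2 v) + BB (rB1 u) (rB2 v))%C)
  (F F' u w : H2) (hw1 : rA2 w = rA2 F) (hw2 : rB2 w = rB2 F')
  (hu : is_newton B (L_ind BA rA1 (rA2 F)) u) :
  exists z, rA2 z = Dlayer rA2 F u /\ forall phi, B phi z = (- BB (rB1 phi) (rB2 F'))%C.
Proof.
  exists (minus u w). split.
  - rewrite (lin_map_minus rA2 rAp rAs). unfold Dlayer, minus. rewrite hw1. apply plus_comm.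
  - intros phi. rewrite (lin_fun_minus (B phi) (fun a x y => linB a phi x y)).
    rewrite hu. unfold L_ind. rewrite (split phi w). rewrite hw1, hw2. ring.
Qed.

Lemma dl_bound {H1 H2 : CompleteNormedModule C_AbsRing} {XA1 XB1 XB2 D2 : Type} {XA2 : ModuleSpace C_Ring}
  (B : H1 -> H2 -> C) (rA1 : H1 -> XA1) (rA2 : H2 -> XA2) (rB1 : H1 -> XB1) (rB2 : H2 -> XB2)
  (BA : XA1 -> XA2 -> C) (BB : XB1 -> XB2 -> C) (Tr2 : H2 -> D2)
  (lambda : R) (hlam : 0 < lambda)
  (infsup1 : forall v : H2,
     Rbar_le (lambda * norm v)
       (Lub_Rbar (fun t => exists w : H1, w <> zero /\ t = Cmod (B w v) / norm w)))
  (linB : forall (a : C) (u : H1) (x y : H2),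
      B u (plus (scal a x) y) = (a * B u x + B u y)%C)
  (rAp : forall x y, rA2 (plus x y) = plus (rA2 x) (rA2 y))
  (rAs : forall (a : C) x, rA2 (scal a x) = scal a (rA2 x))
  (split : forall u v, B u v = (BA (rA1 u) (rA2 v) + BB (rB1 u) (rB2 v))%C)
  (hBB : bounded_bilinear_img rB1 rB2 BB)
  (F u : H2)
  (glue : forall F', Tr2 F' = Tr2 F -> exists w, rA2 w = rA2 F /\ rB2 w = rB2 F')
  (hu : is_newton B (L_ind BA rA1 (rA2 F)) u) :
  qnorm rA2 (Dlayer rA2 F u) <= bform_norm rB1 rB2 BB / lambda * qnorm Tr2 (Tr2 F).
Proof.
  destruct (bform_facts rB1 rB2 BB hBB) as [hN0 hN].
  set (N := bform_norm rB1 rB2 BB) in *.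
  set (K := N / lambda).
  assert (hK0 : 0 <= K) by (unfold K; apply Rdiv_le_0_compat; lra).
  assert (claim : forall F', Tr2 F' = Tr2 F -> qnorm rA2 (Dlayer rA2 F u) <= K * norm F').
  { intros F' hF'. destruct (glue F' hF') as [w [hw1 hw2]].
    destruct (core B rA1 rA2 rB1 rB2 BA BB linB rAp rAs split F F' u w hw1 hw2 hu)
      as [z [hz1 hz2]].
    rewrite <- hz1.
    apply Rle_trans with (norm z). apply qnorm_facts.
    assert (hb : lambda * norm z <= N * norm F').
    { apply (infsup_bound B lambda infsup1). intros phi. rewrite hz2, Cmod_opp.
      apply Rle_trans with (N * qnorm rB1 (rB1 phi) * qnorm rB2 (rB2 F')). apply hN.
      pose proof (qnorm_facts rB1 phi). pose proof (qnorm_facts rB2 F').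
      replace (N * norm F' * norm phi) with (N * norm phi * norm F') by ring.
      apply Rmult_le_compat. 
      - apply Rmult_le_pos; [lra|tauto].
      - tauto.
      - apply Rmult_le_compat_l; [lra|tauto].
      - tauto. }
    unfold K. apply Rmult_le_reg_l with lambda; [lra|].
    replace (lambda * (N / lambda * norm F')) with (N * norm F') by (field; lra).
    exact hb. }
  destruct hK0 as [hKp|hKz].
  - assert (h : qnorm rA2 (Dlayer rA2 F u) / K <= qnorm Tr2 (Tr2 F)).
    { apply qnorm_ge. intros F' hF'. apply Rle_div_l; [exact hKp|].
      rewrite Rmult_comm. apply claim. exact hF'. }
    apply Rle_div_l in h; [|exact hKp]. fold K. lra.
  - pose proof (claim F eq_refl) as h. fold K. rewrite <- hKz in h |- *. lra.
Qed.

Theorem lemma4p2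
  (H1 H2 : CompleteNormedModule C_AbsRing)
  (hH1 : is_hilbert H1) (hH2 : is_hilbert H2)
  (HO1 HO2 HC1 HC2 D1h D2h : ModuleSpace C_Ring)
  (nO1 : HO1 -> R) (nO2 : HO2 -> R) (nC1 : HC1 -> R) (nC2 : HC2 -> R)
  (nD1 : D1h -> R) (nD2 : D2h -> R)
  (snO1 : is_seminorm HO1 nO1) (snO2 : is_seminorm HO2 nO2)
  (snC1 : is_seminorm HC1 nC1) (snC2 : is_seminorm HC2 nC2)
  (snD1 : is_seminorm D1h nD1) (snD2 : is_seminorm D2h nD2)
  (Tr1 : H1 -> D1h) (Tr2 : H2 -> D2h)
  (rO1 : H1 -> HO1) (rO2 : H2 -> HO2) (rC1 : H1 -> HC1) (rC2 : H2 -> HC2)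
  (hTr1 : bounded_linear H1 D1h nD1 Tr1) (hTr2 : bounded_linear H2 D2h nD2 Tr2)
  (hrO1 : bounded_linear H1 HO1 nO1 rO1) (hrO2 : bounded_linear H2 HO2 nO2 rO2)
  (hrC1 : bounded_linear H1 HC1 nC1 rC1) (hrC2 : bounded_linear H2 HC2 nC2 rC2)
  (B : H1 -> H2 -> C) (BO : HO1 -> HO2 -> C) (BC : HC1 -> HC2 -> C)
  (hB : bounded_bilinear H1 H2 B)
  (hBO : bounded_bilinear_img rO1 rO2 BO)
  (hBC : bounded_bilinear_img rC1 rC2 BC)
  (lambda : R) (hlam : 0 < lambda)
  (infsup1 : forall v : H2,
     Rbar_le (lambda * norm v)
       (Lub_Rbar (fun t => exists w : H1, w <> zero /\ t = Cmod (B w v) / norm w)))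
  (infsup2 : forall u : H1,
     Rbar_le (lambda * norm u)
       (Lub_Rbar (fun t => exists w : H2, w <> zero /\ t = Cmod (B u w) / norm w)))
  (split : forall (u : H1) (v : H2),
     B u v = (BO (rO1 u) (rO2 v) + BC (rC1 u) (rC2 v))%C)
  (glue1 : forall phi psi : H1, Tr1 phi = Tr1 psi ->
     exists w : H1, rO1 w = rO1 phi /\ rC1 w = rC1 psi /\ Tr1 w = Tr1 phi)
  (glue2 : forall phi psi : H2, Tr2 phi = Tr2 psi ->
     exists w : H2, rO2 w = rO2 phi /\ rC2 w = rC2 psi /\ Tr2 w = Tr2 phi) :
  (* D^B_Omega f is independent of the lift F of f = Tr2 F *)
  (forall (F F' u u' : H2), Tr2 F = Tr2 F' ->
     is_newton B (L_ind BO rO1 (rO2 F)) u ->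
     is_newton B (L_ind BO rO1 (rO2 F')) u' ->
     Dlayer rO2 F u = Dlayer rO2 F' u') /\
  (* D^B_C f is independent of the lift F *)
  (forall (F F' u u' : H2), Tr2 F = Tr2 F' ->
     is_newton B (L_ind BC rC1 (rC2 F)) u ->
     is_newton B (L_ind BC rC1 (rC2 F')) u' ->
     Dlayer rC2 F u = Dlayer rC2 F' u') /\
  (* ||D^B_Omega f|| <= ||B^C|| / lambda * ||f||_{D2} *)
  (forall (F u : H2),
     is_newton B (L_ind BO rO1 (rO2 F)) u ->
     qnorm rO2 (Dlayer rO2 F u) <= bform_norm rC1 rC2 BC / lambda * qnorm Tr2 (Tr2 F)) /\
  (* ||D^B_C f|| <= ||B^Omega|| / lambda * ||f||_{D2} *)
  (forall (F u : H2),
     is_newton B (L_ind BC rC1 (rC2 F)) u ->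
     qnorm rC2 (Dlayer rC2 F u) <= bform_norm rO1 rO2 BO / lambda * qnorm Tr2 (Tr2 F)) /\
  (* ||S^L_Omega g||_{H2} <= ||g||_{N2} / lambda *)
  (forall (g : D1h -> C) (s : H2), in_dual Tr1 g ->
     is_single_layer B Tr1 g s ->
     norm s <= 1 / lambda * dual_norm Tr1 g).
Proof.
  destruct hB as [_ [linB _]].
  destruct hrO2 as [pO [sO _]]. destruct hrC2 as [pC [sC _]].
  assert (split' : forall u v, B u v = (BC (rC1 u) (rC2 v) + BO (rO1 u) (rO2 v))%C).
  { intros u v. rewrite split. ring. }
  split; [|split; [|split; [|split]]].
  - intros F F' u u' hT hu hu'.
    destruct (glue2 F F' hT) as [w [hw1 [hw2 _]]].
    destruct (core B rO1 rO2 rC1 rC2 BO BC linB pO sO split F F' u w hw1 hw2 hu) as [z [hz1 hz2]].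
    destruct (core B rO1 rO2 rC1 rC2 BO BC linB pO sO split F' F' u' F' eq_refl eq_refl hu') as [z' [hz1' hz2']].
    assert (e : z = z').
    { apply (infsup_uniq B lambda hlam linB infsup1). intros phi. rewrite hz2, hz2'. reflexivity. }
    rewrite <- hz1, <- hz1', e. reflexivity.
  - intros F F' u u' hT hu hu'.
    destruct (glue2 F' F (eq_sym hT)) as [w [hw2 [hw1 _]]].
    destruct (core B rC1 rC2 rO1 rO2 BC BO linB pC sC split' F F' u w hw1 hw2 hu) as [z [hz1 hz2]].
    destruct (core B rC1 rC2 rO1 rO2 BC BO linB pC sC split' F' F' u' F' eq_refl eq_refl hu') as [z' [hz1' hz2']].
    assert (e : z = z').
    { apply (infsup_uniq B lambda hlam linB infsup1). intros phi. rewrite hz2, hz2'. reflexivity. }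
    rewrite <- hz1, <- hz1', e. reflexivity.
  - intros F u hu.
    apply (dl_bound B rO1 rO2 rC1 rC2 BO BC Tr2 lambda hlam infsup1 linB pO sO split hBC F u); [|exact hu].
    intros F' hF'. destruct (glue2 F F' (eq_sym hF')) as [w [hw1 [hw2 _]]]. exists w. tauto.
  - intros F u hu.
    apply (dl_bound B rC1 rC2 rO1 rO2 BC BO Tr2 lambda hlam infsup1 linB pC sC split' hBO F u); [|exact hu].
    intros F' hF'. destruct (glue2 F' F hF') as [w [hw1 [hw2 _]]]. exists w. tauto.
  - intros g s hg hs.
    destruct (dual_facts Tr1 g hg) as [hN0 hN].
    assert (hb : lambda * norm s <= dual_norm Tr1 g).
    { replace (dual_norm Tr1 g) with (dual_norm Tr1 g * 1) by ring.
      apply (infsup_bound B lambda infsup1). intros phi. rewrite hs.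
      apply Rle_trans with (dual_norm Tr1 g * qnorm Tr1 (Tr1 phi)). apply hN.
      rewrite Rmult_1_r. apply Rmult_le_compat_l; [exact hN0|]. apply qnorm_facts. }
    apply Rmult_le_reg_l with lambda; [lra|].
    replace (lambda * (1 / lambda * dual_norm Tr1 g)) with (dual_norm Tr1 g) by (field; lra).
    exact hb.
Qed.
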